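(* If $\mathcal D$ is an edge-independent unbounded probabilistic graph (i.e. $\mathcal D$ belongs to the class of edge-independent graphs defined in the context), then $\mathcal D\notin\mathsf{sjfCQ}(\mathsf{BID})$.
   Context: Fix a countably infinite universe $U$ equipped with a linear order $<$. Facts are $R(u_1,\dots,u_{\mathrm{ar}(R)})$ with $R$ from a finite schema and $u_i\in U$; instances are finite sets of facts; $\mathrm{adom}(D)$ is the set of elements of $U$ occurring in $D$. A probabilistic database (PDB) is a discrete probability space $(\mathbb D,P)$ with $\mathbb D$ a nonempty countable set of instances; its possible worlds are instances of positive probability and $\mathrm{facts}(\mathcal D)$ is their union. A graph database is an instance over a single binary relation $E$; it is simple if it has no fact $E(a,a)$ and undirected if $E(a,b)\in D$ implies $E(b,a)\in D$. The class of edge-independent graphs consists of the PDBs $\mathcal D$ such that: every possible world is a simple undirected graph database; for every sequence of pairwise distinct two-element subsets $\{a_1,b_1\},\dots,\{a_k,b_k\}$ of $U$, $\Pr_{D\sim\mathcal D}(E(a_i,b_i)\in D\text{ for all }i)=\prod_i\Pr_{D\sim\mathcal D}(E(a_i,b_i)\in D)$; and for every $n\in\mathbb N$ there is a possible world $D$ with $|D|>n$. A PDB $\mathcal I$ is block-independent disjoint ($\mathsf{BID}$) if $\mathrm{facts}(\mathcal I)$ can be partitioned into blocks such that facts $f_1,\dots,f_k$ from pairwise different blocks satisfy $\Pr(f_1\in I,\dots,f_k\in I)=\prod_i\Pr(f_i\in I)$ and distinct facts $f,f'$ of the same block satisfy $\Pr(f\in I\text{ and }f'\in I)=0$. A self-join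 free conjunctive query is a formula built from relational atoms $R(\bar u)$ ($\bar u$ variables or constants) and equality atoms using only $\exists,\wedge$, with each relation symbol occurring at most once, evaluated under active domain semantics; an sjfCQ-view consists of one such formula $\Phi_R(x_1,\dots,x_{\mathrm{ar}(R)})$ per output relation $R$, mapping $D$ to the instance of all $R(\bar a)$ with $\bar a$ over $\mathrm{adom}(D)\cup\mathrm{adom}(\Phi_R)$ and $D\models\Phi_R[\bar a]$. The image of a PDB under a view $V$ is the push-forward distribution on $V(\mathbb D)$, and $\mathsf{sjfCQ}(\mathsf{BID})$ is the class of images of BID-PDBs under sjfCQ-views. *)

(* Defs.v *)
From HB Require Import structures.
From mathcomp Require Import all_boot all_order all_algebra.
From mathcomp Require Import finmap.
From mathcomp Require Import boolp classical_sets reals constructive_ereal ereal esum.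

Set Implicit Arguments.
Unset Strict Implicit.
Unset Printing Implicit Defensive.

Import Order.TTheory GRing.Theory Num.Theory.

Local Open Scope ring_scope.

Section PDB.
Variables (U : countType) (R : realType).

Section Dist.
Variable T : choiceType.

(* a probabilistic database, identified with its probability mass function;
   the sample space is all of T (a countable type), worlds of probability
   0 are irrelevant. *)
Definition is_pdb (P : T -> R) : Prop :=
  (forall D, 0 <= P D) /\ (\esum_(D in [set: T]) (P D)%:E = 1%E).

Definition Pr (P : T -> R) (A : set T) : R := fine (\esum_(D in A) (P D)%:E).

End Dist.

Section Schema.
Variables (S : finType) (ar : S -> nat).

Definition fact := {Rs : S & (ar Rs).-tuple U}.
Definition instance := {fset fact}.

Definition facts_of (P : instance -> R) (f : fact) : Prop :=
  exists D : instance, 0 < P D /\ f \in D.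

Definition is_BID (P : instance -> R) : Prop :=
  is_pdb P /\
  exists blk : fact -> fact, (* blocks = fibres of blk restricted to facts(P) *)
    (forall fs : seq fact,
        (forall f, f \in fs -> facts_of P f) ->
        uniq (map blk fs) ->
        Pr P [set D | forall f, f \in fs -> f \in D]
          = \prod_(f <- fs) Pr P [set D | f \in D]) /\
    (forall f f' : fact, facts_of P f -> facts_of P f' -> f != f' ->
        blk f = blk f' -> Pr P [set D | f \in D /\ f' \in D] = 0).

Inductive term := TVar of nat | TConst of U.

Inductive cq :=
| Atom of S & seq term
| Equal of term & term
| And of cq & cq
| Ex of nat & cq.

Definition teval (nu : nat -> U) (t : term) : U :=
  match t with TVar n => nu n | TConst u => u end.

Definition tconst (t : term) : seq U :=
  match t with TVar _ => [::] | TConst u => [:: u] end.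

Definition tvar (t : term) : seq nat :=
  match t with TVar n => [:: n] | TConst _ => [::] end.

Fixpoint consts (phi : cq) : seq U :=
  match phi with
  | Atom _ ts => flatten (map tconst ts)
  | Equal t1 t2 => tconst t1 ++ tconst t2
  | And p q => consts p ++ consts q
  | Ex _ p => consts p
  end.

Fixpoint fv (phi : cq) : seq nat :=
  match phi with
  | Atom _ ts => flatten (map tvar ts)
  | Equal t1 t2 => tvar t1 ++ tvar t2
  | And p q => fv p ++ fv q
  | Ex x p => seq.filter (fun y => y != x) (fv p)
  end.

Fixpoint rels (phi : cq) : seq S :=
  match phi with
  | Atom Rs _ => [:: Rs]
  | Equal _ _ => [::]
  | And p q => rels p ++ rels q
  | Ex _ p => rels p
  end.

Fixpoint wf_cq (phi : cq) : bool :=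
  match phi with
  | Atom Rs ts => size ts == ar Rs
  | Equal _ _ => true
  | And p q => wf_cq p && wf_cq q
  | Ex _ p => wf_cq p
  end.

Definition sjf (phi : cq) : bool := wf_cq phi && uniq (rels phi).

Definition adom (D : instance) : seq U :=
  flatten (map (fun f : fact => tval (projT2 f)) (enum_fset D)).

Fixpoint sat (D : instance) (dom : seq U) (nu : nat -> U) (phi : cq) : bool :=
  match phi with
  | Atom Rs ts =>
      has (fun f : fact => (projT1 f == Rs) && (tval (projT2 f) == map (teval nu) ts))
          (enum_fset D)
  | Equal t1 t2 => teval nu t1 == teval nu t2
  | And p q => sat D dom nu p && sat D dom nu q
  | Ex x p => has (fun a => sat D dom (fun n => if n == x then a else nu n) p) dom
  end.

(** A graph database is represented as a finite set of pairs (a,b),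
   (a,b) standing for the fact E(a,b). The output variables x1, x2 of
   Phi_E(x1,x2) are the variables 0 and 1. *)
Definition graph := {fset (U * U)}.

Definition out_assign (a b : U) : nat -> U := fun n => if n == 0%N then a else b.

Definition is_sjf_graph_view (phi : cq) : Prop :=
  sjf phi /\ (forall x, x \in fv phi -> (x < 2)%N).

(* V(D): all E(a,b) with a,b in adom(D) u adom(Phi) and D |= Phi[a,b],
   active-domain semantics (quantifiers range over adom(D) u adom(Phi)) *)
Definition view (phi : cq) (D : instance) : graph :=
  let dom := adom D ++ consts phi in
  seq_fset tt [seq p <- [seq (a, b) | a <- dom, b <- dom]
              | sat D dom (out_assign p.1 p.2) phi].

End Schema.

(** D is in sjfCQ(BID): D is the push-forward of some BID-PDB (over some
    finite schema) under some sjfCQ-view. *)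
Definition in_sjfCQ_BID (Q : graph -> R) : Prop :=
  exists (S : finType) (ar : S -> nat) (P : instance ar -> R) (phi : cq S),
    is_BID P /\ is_sjf_graph_view ar phi /\
    forall J : graph, Q J = Pr P [set D | view phi D = J].

Definition edge_independent (Q : graph -> R) : Prop :=
  is_pdb Q /\
  (forall J : graph, 0 < Q J ->
     (forall a, (a, a) \notin J) /\ (forall a b, (a, b) \in J -> (b, a) \in J)) /\
  (forall s : seq (U * U),
     all (fun p => p.1 != p.2) s ->
     uniq [seq [fset p.1; p.2]%fset | p <- s] ->
     Pr Q [set J | forall p, p \in s -> p \in J]
       = \prod_(p <- s) Pr Q [set J | p \in J]) /\
  (forall n : nat, exists J : graph, 0 < Q J /\ (n < #|` J|)%N).

End PDB.

Definition infinite_type (U : countType) : Prop := forall s : seq U, exists u, u \notin s.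

(* Main.v *)
Require Import Defs.
From HB Require Import structures.
From mathcomp Require Import all_boot all_order all_algebra.
From mathcomp Require Import finmap.
From mathcomp Require Import boolp classical_sets reals constructive_ereal ereal esum cardinality fsbigop.

Set Implicit Arguments.
Unset Strict Implicit.
Unset Printing Implicit Defensive.

Import Order.TTheory GRing.Theory Num.Theory.
From mathcomp Require Import lra.
Section CQ.
Variables (U : countType) (S : finType) (ar : S -> nat).
Local Notation inst := (instance U ar).
Local Notation fct := (fact U ar).

Lemma sat_atomP (D : inst) dom nu Rs ts :
  reflect (exists2 f : fct, f \in D & projT1 f = Rs /\ tval (projT2 f) = map (teval nu) ts)
          (sat D dom nu (Atom Rs ts)).
Proof.
apply: (iffP hasP) => [[f fD /andP[/eqP e1 /eqP e2]]|[f fD [e1 e2]]].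
  by exists f.
by exists f => //; apply/andP; split; apply/eqP.
Qed.

Lemma sat_mono (D D' : inst) dom dom' nu (phi : cq U S) :
  (forall f, f \in D -> f \in D') -> {subset dom <= dom'} ->
  sat D dom nu phi -> sat D' dom' nu phi.
Proof.
move=> DD' dd'; elim: phi nu => [Rs ts|t1 t2|p IHp q IHq|x p IHp] nu.
- move=> /sat_atomP[f fD e]; apply/sat_atomP; exists f => //; exact: DD'.
- by [].
- by move=> /= /andP[/IHp -> /IHq ->].
- by move=> /= /hasP[a /dd' ad /IHp h]; apply/hasP; exists a.
Qed.

Definition zipw (g : U -> U -> U) (s t : seq U) := [seq g p.1 p.2 | p <- zip s t].

Lemma sat_prod (D1 D2 D : inst) dom1 dom2 dom (nu1 nu2 nu : nat -> U)
  (g : U -> U -> U) (phi : cq U S) :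
  (forall u v, u \in dom1 -> v \in dom2 -> g u v \in dom) ->
  (forall c, c \in consts phi -> g c c = c) ->
  (forall f1 f2 : fct, f1 \in D1 -> f2 \in D2 -> projT1 f1 = projT1 f2 ->
     exists2 f : fct, f \in D & projT1 f = projT1 f1 /\
        tval (projT2 f) = zipw g (tval (projT2 f1)) (tval (projT2 f2))) ->
  (forall n, nu n = g (nu1 n) (nu2 n)) ->
  sat D1 dom1 nu1 phi -> sat D2 dom2 nu2 phi -> sat D dom nu phi.
Proof.
move=> gdom; elim: phi nu1 nu2 nu => [Rs ts|t1 t2|p IHp q IHq|x p IHp] nu1 nu2 nu gc hf hnu.
- move=> /sat_atomP[f1 f1D [e1 e2]] /sat_atomP[f2 f2D [e1' e2']].
  have [f fD [ef1 ef2]] := hf f1 f2 f1D f2D (etrans e1 (esym e1')).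
  apply/sat_atomP; exists f => //; split; first by rewrite ef1.
  rewrite ef2 e2 e2' /zipw; clear -gc hnu; move: gc; elim: ts => [|t ts IH] //= gc.
  rewrite IH; last by move=> c hc; apply: gc; rewrite mem_cat hc orbT.
  congr (_ :: _); case: t gc => [n|c] gc /=; first by rewrite hnu.
  by rewrite gc // mem_cat mem_head.
- case: t1 t2 gc => [n1|c1] [n2|c2] /= gc /eqP e1 /eqP e2; apply/eqP => /=.
  + by rewrite !hnu e1 e2.
  + by rewrite hnu e1 e2 gc // inE.
  + by rewrite hnu -e1 -e2 gc // inE.
  + by [].
- move=> /= /andP[s1 s2] /andP[s1' s2'].
  rewrite (IHp nu1 nu2 nu) ?(IHq nu1 nu2 nu) //.
  + by move=> c hc; apply: gc; rewrite mem_cat hc orbT.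
  + by move=> c hc; apply: gc; rewrite mem_cat hc.
- move=> /= /hasP[a1 a1d s1] /hasP[a2 a2d s2]; apply/hasP.
  exists (g a1 a2); first exact: gdom.
  apply: (IHp _ _ _ gc hf _ s1 s2) => n; case: eqP => _ //.
Qed.

End CQ.
Section CQ2.
Variables (U : countType) (S : finType) (ar : S -> nat).
Local Notation inst := (instance U ar).
Local Notation fct := (fact U ar).
Local Open Scope fset_scope.

Definition functional (F : inst) :=
  forall f f' : fct, f \in F -> f' \in F -> projT1 f = projT1 f' -> f = f'.

Lemma sat_witness (D : inst) dom nu (phi : cq U S) : uniq (rels phi) ->
  sat D dom nu phi ->
  exists F : inst, [/\ (forall f, f \in F -> f \in D),
     (forall f : fct, f \in F -> projT1 f \in rels phi), functional F &
     sat F dom nu phi].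
Proof.
elim: phi nu => [Rs ts|t1 t2|p IHp q IHq|x p IHp] nu urel.
- move=> /sat_atomP[f fD [e1 e2]]; exists [fset f]; split.
  + by move=> g; rewrite in_fset1 => /eqP ->.
  + by move=> g; rewrite in_fset1 => /eqP ->; rewrite e1 inE.
  + by move=> g g'; rewrite !in_fset1 => /eqP -> /eqP ->.
  + by apply/sat_atomP; exists f => //; rewrite in_fset1.
- by move=> /= h; exists fset0; split => // f; rewrite in_fset0.
- move: urel; rewrite /= cat_uniq => /and3P[up hpq uq] /andP[sp sq].
  have [Fp [Fp1 Fp2 Fp3 Fp4]] := IHp nu up sp.
  have [Fq [Fq1 Fq2 Fq3 Fq4]] := IHq nu uq sq.
  exists (Fp `|` Fq); split.
  + by move=> f; rewrite in_fsetU => /orP[/Fp1|/Fq1].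
  + by move=> f; rewrite in_fsetU mem_cat => /orP[/Fp2 ->|/Fq2 ->]; rewrite ?orbT.
  + move=> f f'; rewrite !in_fsetU => /orP[hf|hf] /orP[hf'|hf'] e.
    * exact: Fp3.
    * by move: hpq => /hasPn /(_ _ (Fq2 _ hf')); rewrite -e Fp2.
    * by move: hpq => /hasPn /(_ _ (Fq2 _ hf)); rewrite e Fp2.
    * exact: Fq3.
  + apply/andP; split.
      by apply: sat_mono Fp4 => // f hf; rewrite in_fsetU hf.
    by apply: sat_mono Fq4 => // f hf; rewrite in_fsetU hf orbT.
- move=> /= /hasP[a ad sa].
  have [F [F1 F2 F3 F4]] := IHp _ urel sa.
  by exists F; split => //; apply/hasP; exists a.
Qed.

Lemma in_adom (D : inst) u :
  reflect (exists2 f : fct, f \in D & u \in tval (projT2 f)) (u \in adom D).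
Proof.
apply: (iffP flattenP) => [[s /mapP[f fD ->] us]|[f fD uf]].
  by exists f.
by exists (tval (projT2 f)) => //; apply/mapP; exists f.
Qed.

Lemma in_view (phi : cq U S) (D : inst) a b :
  ((a, b) \in view phi D) =
  [&& a \in adom D ++ consts phi, b \in adom D ++ consts phi &
      sat D (adom D ++ consts phi) (out_assign a b) phi].
Proof.
rewrite /view seq_fsetE mem_filter /=.
case: sat; rewrite ?andbT ?andbF //.
apply/allpairsP/andP => [[[x y] /= [hx hy [-> ->]]]|[ha hb]] //.
by exists (a, b).
Qed.

End CQ2.
Section Prob.
Local Open Scope classical_set_scope.
Local Open Scope ring_scope.
Variables (R : realType) (T : choiceType) (P : T -> R).
Hypothesis hP : is_pdb P.

Lemma P_ge0 D : 0 <= P D. Proof. by case: hP. Qed.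

Lemma esum_le1 (A : set T) : (\esum_(D in A) (P D)%:E <= 1)%E.
Proof.
case: hP => P0 P1; rewrite -P1 esum_mkcond; apply: le_esum => D _.
by case: ifP => _ //; rewrite lee_fin P0.
Qed.

Lemma esum_fin (A : set T) : \esum_(D in A) (P D)%:E \is a fin_num.
Proof.
rewrite ge0_fin_numE ?(le_lt_trans (esum_le1 A)) ?ltry //.
by apply: esum_ge0 => D _; rewrite lee_fin P_ge0.
Qed.

Lemma PrE (A : set T) : (Pr P A)%:E = \esum_(D in A) (P D)%:E.
Proof. by rewrite /Pr fineK // esum_fin. Qed.

Lemma Pr_ge0 A : 0 <= Pr P A.
Proof. by rewrite -lee_fin PrE; apply: esum_ge0 => D _; rewrite lee_fin P_ge0. Qed.

Lemma Pr_le1 A : Pr P A <= 1.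
Proof. by rewrite -lee_fin PrE esum_le1. Qed.

Lemma Pr_setT : Pr P setT = 1.
Proof. by case: hP => _ h; rewrite /Pr h. Qed.

Lemma Pr_split (A B : set T) : Pr P A = Pr P (A `&` B) + Pr P (A `&` ~` B).
Proof.
apply: EFin_inj; rewrite EFinD !PrE (esumID B) // => D _; by rewrite lee_fin P_ge0.
Qed.

Lemma Pr_ext (A B : set T) : (forall D, A D <-> B D) -> Pr P A = Pr P B.
Proof.
by move=> h; congr Pr; apply/funext => D; apply/propext; apply: h.
Qed.

Lemma Pr_mono (A B : set T) : (forall D, A D -> B D) -> Pr P A <= Pr P B.
Proof.
move=> AB; rewrite (Pr_split B A) (@Pr_ext (B `&` A) A); last first.
  by move=> D; split => [[]|h]//; split => //; apply: AB.
by rewrite lerDl Pr_ge0.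
Qed.

Lemma Pr_term (A : set T) D : A D -> P D <= Pr P A.
Proof.
move=> AD; rewrite -lee_fin PrE; apply: esum_ge; exists [set D].
  by split; [exact: finite_set1| move=> x ->].
by rewrite fsbig_set1.
Qed.

Lemma Pr_null (A : set T) : (forall D, A D -> ~ 0 < P D) -> Pr P A = 0.
Proof.
move=> h; rewrite /Pr esum1 // => D /h hD; congr (_%:E).
by apply/eqP; rewrite eq_le P_ge0 andbT leNgt; apply/negP.
Qed.

Lemma Pr_approx (e : R) : 0 < e ->
  exists W : {fset T}, Pr P [set D | D \notin W] <= e.
Proof.
move=> e0; case: hP => _ P1.
have : ((1 - e)%:E < \esum_(D in [set: T]) (P D)%:E)%E.
  by rewrite P1 lte_fin ltrBlDr ltrDl.
move=> /ereal_sup_gt[_ [X [finX _] <-]] hX.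
exists (fset_set X).
have hXE : Pr P [set D | D \notin fset_set X] = Pr P (setT `&` ~` X).
  apply: Pr_ext => D /=; rewrite (in_fset_set finX); split.
    by move=> /negP h; split => //; rewrite /setC /=; move=> XD; apply: h; rewrite inE.
  by move=> [_ h]; apply/negP; rewrite inE.
have := Pr_split setT X; rewrite Pr_setT hXE => h1.
have hX2 : (1 - e) < Pr P (setT `&` X).
  by rewrite -lte_fin PrE (lt_le_trans hX) //; apply: esum_ge; exists X => //.
lra.
Qed.

End Prob.
Section BID.
Local Open Scope classical_set_scope.
Local Open Scope ring_scope.
Variables (U : countType) (R : realType) (S : finType) (ar : S -> nat).
Local Notation inst := (instance U ar).
Local Notation fct := (fact U ar).
Variables (P : inst -> R) (blk : fct -> fct).
Hypothesis hP : is_pdb P.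
Hypothesis hind : forall fs : seq fct,
        (forall f, f \in fs -> facts_of P f) ->
        uniq (map blk fs) ->
        Pr P [set D | forall f, f \in fs -> f \in D]
          = \prod_(f <- fs) Pr P [set D | f \in D].
Hypothesis hexcl : forall f f' : fct, facts_of P f -> facts_of P f' -> f != f' ->
        blk f = blk f' -> Pr P [set D | f \in D /\ f' \in D] = 0.

Lemma pos_facts (D : inst) f : 0 < P D -> f \in D -> facts_of P f.
Proof. by move=> hD fD; exists D. Qed.

Lemma pos_blk (D : inst) f f' : 0 < P D -> f \in D -> f' \in D -> blk f = blk f' -> f = f'.
Proof.
move=> hD fD f'D eb; apply/eqP/negPn/negP => ne.
have := hexcl (pos_facts hD fD) (pos_facts hD f'D) ne eb.
have := Pr_term hP (A := [set D | f \in D /\ f' \in D]) (conj fD f'D).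
move=> h1 h2; rewrite h2 in h1; move: hD; rewrite ltNge h1.
done.
Qed.

Definition Ev (A C Y : seq fct) : set inst :=
  [set D | (forall f, f \in A -> f \in D) /\ (forall f, f \in C -> f \in D) /\
           (forall f, f \in Y -> f \notin D)].

Lemma Ev_split A C Y y : Pr P (Ev A C Y) = Pr P (Ev A (y :: C) Y) + Pr P (Ev A C (y :: Y)).
Proof.
rewrite (Pr_split hP _ [set D | y \in D]); congr (_ + _); apply: Pr_ext => D.
  split => [[[h1 [h2 h3]] hy]|[h1 [h2 h3]]].
    split => //; split => // f; rewrite inE => /orP[/eqP->|]; [exact: hy|exact: h2].
  have hy : y \in D by apply: (h2); rewrite mem_head.
  split => //; split => //; split => // f hf.
  by apply: (h2); rewrite inE hf orbT.
split => [[[h1 [h2 h3]] hy]|[h1 [h2 h3]]].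
  split => //; split => // f; rewrite inE => /orP[/eqP->|]; last exact: h3.
  by apply/negP.
have hy : y \notin D by apply: (h3); rewrite mem_head.
split => //; last by move=> h; move: hy; rewrite h.
split => //; split => // f hf.
by apply: (h3); rewrite inE hf orbT.
Qed.

Definition goodC (C : seq fct) :=
  (forall f, f \in C -> facts_of P f) /\
  (forall f f', f \in C -> f' \in C -> blk f = blk f' -> f = f').

Lemma Ev_bad A C Y : ~ goodC C -> Pr P (Ev A C Y) = 0.
Proof.
move=> hC; apply: (Pr_null hP) => D [_ [h2 _]] hD; apply: hC; split.
  by move=> f /(h2 _); exact: (pos_facts hD).
by move=> f f' /(h2 _) fD /(h2 _) f'D; exact: (pos_blk hD fD f'D).
Qed.

Lemma Pr_all (A : seq fct) : goodC A ->
  Pr P [set D | forall f, f \in A -> f \in D] = \prod_(f <- undup A) Pr P [set D | f \in D].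
Proof.
move=> [h1 h2]; rewrite -hind.
- by apply: Pr_ext => D; split => h f hf; apply: h; rewrite ?mem_undup // -mem_undup.
- by move=> f; rewrite mem_undup; exact: h1.
rewrite map_inj_in_uniq ?undup_uniq // => f f'; rewrite !mem_undup; exact: h2.
Qed.

Lemma indep (A : seq fct) : goodC A -> forall Y C,
  (forall f g, f \in A -> g \in C ++ Y -> blk f != blk g) ->
  Pr P (Ev A C Y) = Pr P (Ev A [::] [::]) * Pr P (Ev [::] C Y).
Proof.
move=> hA; elim=> [|y Y IH] C hd.
- case: (pselect (goodC C)) => hC; last by rewrite (@Ev_bad A C [::] hC) (@Ev_bad [::] C [::] hC) mulr0.
  have hAC : goodC (A ++ C).
    case: hA hC => [a1 a2] [c1 c2]; split.
      by move=> f; rewrite mem_cat => /orP[/a1|/c1].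
    move=> f f'; rewrite !mem_cat => /orP[hf|hf] /orP[hf'|hf'] e.
    + exact: a2.
    + by move: (hd f f' hf); rewrite cats0 hf' e eqxx => /(_ isT).
    + by move: (hd f' f hf'); rewrite cats0 hf e eqxx => /(_ isT).
    + exact: c2.
  have E1 : Pr P (Ev A C [::]) = Pr P [set D | forall f, f \in A ++ C -> f \in D].
    apply: Pr_ext => D; split => [[h1 [h2 _]] f|h].
      by rewrite mem_cat => /orP[/h1|/h2].
    by split; [|split] => // f hf; apply: h; rewrite mem_cat hf ?orbT.
  have E2 : Pr P (Ev A [::] [::]) = Pr P [set D | forall f, f \in A -> f \in D].
    by apply: Pr_ext => D; split => [[h1 _]|h] //.
  have E3 : Pr P (Ev [::] C [::]) = Pr P [set D | forall f, f \in C -> f \in D].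
    by apply: Pr_ext => D; split => [[_ [h2 _]]|h] //.
  rewrite E1 E2 E3 !Pr_all //.
  have -> : undup (A ++ C) = undup A ++ undup C.
    rewrite undup_cat; congr (_ ++ _).
    apply/all_filterP/allP => f hf; apply/negP => /= fC.
    by move: (hd f f); rewrite -(mem_undup A) hf cats0 fC eqxx => /(_ isT isT).
  by rewrite big_cat.
- have hd1 : forall f g, f \in A -> g \in (y :: C) ++ Y -> blk f != blk g.
    by move=> f g hf hg; apply: hd => //; move: hg; rewrite !mem_cat !inE; case/orP=> [/orP[->|->]|->]; rewrite ?orbT.
  have hd2 : forall f g, f \in A -> g \in C ++ Y -> blk f != blk g.
    by move=> f g hf hg; apply: hd => //; move: hg; rewrite !mem_cat !inE; case/orP=> ->; rewrite ?orbT.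
  have := Ev_split A C Y y; rewrite (IH _ hd1) (IH _ hd2) (Ev_split [::] C Y y) mulrDr.
  by move=> /addrI ->.
Qed.

End BID.
Lemma zipw_l (U : countType) (g : U -> U -> U) (s t : seq U) :
  size s <= size t -> (forall p, p \in zip s t -> g p.1 p.2 = p.1) -> zipw g s t = s.
Proof.
move=> hs hp; rewrite /zipw -[RHS](unzip1_zip hs); apply/eq_in_map => p hp'.
exact: hp.
Qed.

Lemma zip_diag (U : eqType) (s : seq U) x y : (x, y) \in zip s s -> x = y.
Proof.
elim: s => [|z s IH] //=; rewrite inE => /orP[/eqP[-> ->]//|]; exact: IH.
Qed.

Lemma mem_zip2 (U : eqType) (s t : seq U) x y : (x, y) \in zip s t -> y \in t.
Proof.
elim: s t => [|z s IH] [|w t] //=; rewrite inE => /orP[/eqP[_ ->]|/IH h].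
  by rewrite eqxx.
by rewrite h orbT.
Qed.

Lemma mem_zip1 (U : eqType) (s t : seq U) x y : (x, y) \in zip s t -> x \in s.
Proof.
elim: s t => [|z s IH] [|w t] //=; rewrite inE => /orP[/eqP[-> _]|/IH h].
  by rewrite eqxx.
by rewrite h orbT.
Qed.

Lemma cardfs_size (K : choiceType) (A : {fset K}) : #|` A| = size (enum_fset A).
Proof. by rewrite card_fset_sum1 sum1_size. Qed.

Section Main.
Local Open Scope classical_set_scope.
Local Open Scope ring_scope.
Variables (U : countType) (R : realType) (S : finType) (ar : S -> nat).
Local Notation inst := (instance U ar).
Local Notation fct := (fact U ar).
Variables (P : inst -> R) (blk : fct -> fct) (Q : graph U -> R) (phi : cq U S).
Hypothesis hP : is_pdb P.
Hypothesis hind : forall fs : seq fct,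
        (forall f, f \in fs -> facts_of P f) ->
        uniq (map blk fs) ->
        Pr P [set D | forall f, f \in fs -> f \in D]
          = \prod_(f <- fs) Pr P [set D | f \in D].
Hypothesis hexcl : forall f f' : fct, facts_of P f -> facts_of P f' -> f != f' ->
        blk f = blk f' -> Pr P [set D | f \in D /\ f' \in D] = 0.
Hypothesis hrels : uniq (rels phi).
Hypothesis hQ : forall J : graph U, Q J = Pr P [set D | view phi D = J].
Hypothesis hsimp : forall J : graph U, 0 < Q J ->
     (forall a, (a, a) \notin J) /\ (forall a b, (a, b) \in J -> (b, a) \in J).

Local Notation dom D := (adom D ++ consts phi).

Lemma world_simple (D : inst) : 0 < P D ->
  (forall a, (a, a) \notin view phi D) /\
  (forall a b, (a, b) \in view phi D -> (b, a) \in view phi D).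
Proof.
move=> hD; apply: hsimp; rewrite hQ; apply: lt_le_trans hD _.
exact: (Pr_term hP (A := [set D' | view phi D' = view phi D])).
Qed.

Lemma hom (F D : inst) dom1 dom2 (nu nu' : nat -> U) (sg : U -> U) :
  sat F dom1 nu phi -> (forall u, u \in dom1 -> sg u \in dom2) ->
  (forall u, u \in adom F ++ consts phi -> sg u = u) ->
  (forall f, f \in F -> f \in D) -> (forall n, nu' n = sg (nu n)) ->
  sat D dom2 nu' phi.
Proof.
move=> s hd hfix FD hn.
apply: (@sat_prod _ _ _ F F D dom1 dom1 dom2 nu nu nu' (fun u _ => sg u) phi _ _ _ _ s s).
- by move=> u v hu _; apply: hd.
- by move=> c hc; apply: hfix; rewrite mem_cat hc orbT.
- move=> f1 f2 f1F f2F e; exists f1; first exact: FD.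
  split => //; rewrite zipw_l //.
    by rewrite !size_tuple e.
  case=> x y /= /mem_zip1 hx; apply: hfix; rewrite mem_cat; apply/orP; left.
  by apply/in_adom; exists f1.
- by [].
Qed.

Lemma sub_dom (F D : inst) u : (forall f, f \in F -> f \in D) ->
  u \in adom F ++ consts phi -> u \in dom D.
Proof.
move=> FD; rewrite !mem_cat => /orP[/in_adom[f fF uf]|->]; last by rewrite orbT.
by apply/orP; left; apply/in_adom; exists f => //; apply: FD.
Qed.

Lemma no_loop (F D : inst) (nu : nat -> U) (sg : U -> U) c :
  0 < P D -> sat F (dom D) nu phi -> (forall f, f \in F -> f \in D) ->
  (forall u, u \in dom D -> sg u \in dom D) ->
  (forall u, u \in adom F ++ consts phi -> sg u = u) ->
  (forall n, out_assign c c n = sg (nu n)) -> c \in dom D -> False.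
Proof.
move=> hD s FD hd hfix hn hc.
have s' : sat D (dom D) (out_assign c c) phi by apply: hom s hd hfix FD hn.
have [h1 _] := world_simple hD.
by move: (h1 c); rewrite in_view hc s'.
Qed.

Section Witness.
Variables (D1 : inst) (a b : U).
Hypothesis hD1 : 0 < P D1.
Hypothesis hab : (a, b) \in view phi D1.

Lemma ab_neq : a != b.
Proof.
apply/negP => /eqP e; have [h1 _] := world_simple hD1.
by move: (h1 a); rewrite {2}e hab.
Qed.

Lemma witness_ex : exists F : inst, [/\ (forall f, f \in F -> f \in D1),
     functional F, a \in adom F ++ consts phi, b \in adom F ++ consts phi &
     forall D : inst, (forall f, f \in F -> f \in D) ->
        sat F (dom D) (out_assign a b) phi].
Proof.
move: hab; rewrite in_view => /and3P[ha hb s].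
have [F [F1 _ F3 F4]] := sat_witness hrels s.
have nab := ab_neq.
have hA : a \in adom F ++ consts phi.
  apply/negPn/negP => hn.
  apply: (@no_loop F D1 (out_assign a b) (fun u => if u == a then b else u) b hD1 F4 F1) => //.
  - by move=> u hu; case: eqP.
  - by move=> u hu; case: eqP => // e; move: hn; rewrite -e hu.
  - by move=> n; rewrite /out_assign; case: eqP => _; rewrite ?eqxx // eq_sym (negbTE nab).
have hB : b \in adom F ++ consts phi.
  apply/negPn/negP => hn.
  apply: (@no_loop F D1 (out_assign a b) (fun u => if u == b then a else u) a hD1 F4 F1) => //.
  - by move=> u hu; case: eqP.
  - by move=> u hu; case: eqP => // e; move: hn; rewrite -e hu.
  - by move=> n; rewrite /out_assign; case: eqP => _; rewrite ?eqxx // (negbTE nab).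
exists F; split => // D FD.
apply: (@hom F F (dom D1) (dom D) (out_assign a b) (out_assign a b)
          (fun u => if u \in adom F ++ consts phi then u else a)) => //.
- by move=> u _; case: ifP => h; apply: (sub_dom FD).
- by move=> u ->.
- by move=> n; rewrite /out_assign; case: eqP => _; rewrite ?hA ?hB.
Qed.

End Witness.

Lemma tag (F : inst) a b : a != b -> functional F ->
  a \in adom F ++ consts phi -> b \in adom F ++ consts phi ->
  (forall D : inst, (forall f, f \in F -> f \in D) -> sat F (dom D) (out_assign a b) phi) ->
  forall D : inst, 0 < P D -> (forall f, f \in F -> f \in D) ->
  exists g : fct, [/\ g \in D, g \notin F & b \in tval (projT2 g)].
Proof.
move=> nab Ffun hA hB hsat D hD FD.
have sF := hsat D FD.
have hab : (a, b) \in view phi D.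
  by rewrite in_view !(sub_dom FD) //=; apply: sat_mono sF => //.
have [h1 h2] := world_simple hD.
have := h2 _ _ hab; rewrite in_view => /and3P[hb ha sD].
apply/not_existsP => H.
pose g := fun u v : U => if (u == a) && (v == b) then b else u.
have gself : forall u, g u u = u.
  by move=> u; rewrite /g; case: ifP => // /andP[_ /eqP ->].
have s' : sat D (dom D) (out_assign b b) phi.
  apply: (@sat_prod _ _ _ F D D (dom D) (dom D) (dom D) (out_assign a b) (out_assign b a)
            (out_assign b b) g phi _ _ _ _ sF sD).
  - by move=> u v hu _; rewrite /g; case: ifP.
  - by move=> c _; apply: gself.
  - move=> f1 f2 f1F f2D e; exists f1; first exact: FD.
    split => //; rewrite zipw_l //; first by rewrite !size_tuple e.
    case=> x y /= hxy.
    have [f2F|f2F] := boolP (f2 \in F).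
      by have e2 := Ffun _ _ f1F f2F e; move: hxy; rewrite -e2 => /zip_diag ->; apply: gself.
    have nb : b \notin tval (projT2 f2).
      by apply/negP => hb2; apply: (H f2); split.
    rewrite /g; case: ifP => // /andP[_ /eqP ey]; move: nb.
    by rewrite -ey (mem_zip2 hxy).
  - move=> n; rewrite /out_assign /g; case: eqP => _; first by rewrite !eqxx.
    by case: ifP.
by move: (h1 b); rewrite in_view hb s'.
Qed.

End Main.
Section Final.
Local Open Scope classical_set_scope.
Local Open Scope ring_scope.
Variables (U : countType) (R : realType) (S : finType) (ar : S -> nat).
Local Notation inst := (instance U ar).
Local Notation fct := (fact U ar).
Variables (P : inst -> R) (blk : fct -> fct) (Q : graph U -> R) (phi : cq U S).
Hypothesis hP : is_pdb P.
Hypothesis hind : forall fs : seq fct,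
        (forall f, f \in fs -> facts_of P f) ->
        uniq (map blk fs) ->
        Pr P [set D | forall f, f \in fs -> f \in D]
          = \prod_(f <- fs) Pr P [set D | f \in D].
Hypothesis hexcl : forall f f' : fct, facts_of P f -> facts_of P f' -> f != f' ->
        blk f = blk f' -> Pr P [set D | f \in D /\ f' \in D] = 0.
Hypothesis hrels : uniq (rels phi).
Hypothesis hQ : forall J : graph U, Q J = Pr P [set D | view phi D = J].
Hypothesis hsimp : forall J : graph U, 0 < Q J ->
     (forall a, (a, a) \notin J) /\ (forall a b, (a, b) \in J -> (b, a) \in J).
Hypothesis hunb : forall n : nat, exists J : graph U, 0 < Q J /\ (n < #|` J|)%N.

Lemma final_contra : False.
Proof.
have [D0 hD0] : exists D0 : inst, 0 < P D0.
  apply/not_existsP => H.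
  have := Pr_setT hP; rewrite (Pr_null hP (A := setT)) => [|D _ hD]; last exact: (H D).
  by move=> /eqP; rewrite eq_sym oner_eq0.
pose K := adom D0.
have [J [hJ cJ]] := hunb (size K * size K).
have [a [b [habJ hbK]]] : exists a b, (a, b) \in J /\ b \notin K.
  apply/not_existsP => H.
  have H' : forall x y, (x, y) \in J -> y \in K.
    move=> x y hxy; apply/negPn/negP => hy; apply: (H x); exists y; split => //.
  have [_ hsym] := hsimp hJ.
  move: cJ; rewrite ltnNge => /negP; apply.
  apply: (leq_trans (eq_leq (cardfs_size J))).
  rewrite -(size_allpairs pair K K); apply: uniq_leq_size; first exact: fset_uniq.
  case=> x y hxy; apply/allpairsP; exists (x, y) => /=; split => //.
    exact: (H' y x (hsym _ _ hxy)).
  exact: (H' x y hxy).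
have [D1 [hD1 eD1]] : exists D1 : inst, 0 < P D1 /\ view phi D1 = J.
  apply/not_existsP => H; move: hJ; rewrite hQ (Pr_null hP) ?ltxx // => D eD hD.
  by apply: (H D).
have hab : (a, b) \in view phi D1 by rewrite eD1.
have nab := ab_neq hP hQ hsimp hD1 hab.
have [F [F1 Ffun hA hB hsat]] := witness_ex hP hrels hQ hsimp hD1 hab.
have tagD := tag hP hQ hsimp nab Ffun hA hB hsat.
pose A := enum_fset F.
have hgood : goodC P blk A.
  split.
    by move=> f hf; apply: (pos_facts hD1); apply: F1.
  by move=> f f' hf hf'; apply: (pos_blk hP hexcl hD1); apply: F1.
pose e := P D1 * P D0 / 2.
have e0 : 0 < e by rewrite /e divr_gt0 // mulr_gt0.
have [W hW] := Pr_approx hP e0.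
pose Y := [seq g <- flatten [seq enum_fset D | D <- enum_fset W] |
            (b \in tval (projT2 g)) && all (fun f => blk f != blk g) A].
have hd : forall f g, f \in A -> g \in [::] ++ Y -> blk f != blk g.
  by move=> f g hf; rewrite /= mem_filter => /andP[/andP[_ /allP h] _]; apply: h.
have Eq := indep hP hind hexcl hgood hd.
have L1 : P D1 <= Pr P (Ev A [::] [::]).
  by apply: (Pr_term hP); split; [move=> f hf; apply: F1|split].
have L2 : P D0 <= Pr P (Ev [::] [::] Y).
  apply: (Pr_term hP); split => //; split => // g; rewrite mem_filter.
  move=> /andP[/andP[hbg _] _]; apply/negP => gD0; move: hbK; rewrite /K.
  by move/negP; apply; apply/in_adom; exists g.
have L3 : Pr P (Ev A [::] Y) <= e.
  rewrite (Pr_split hP _ [set D | D \in W]).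
  rewrite (Pr_null hP (A := Ev A [::] Y `&` [set D | D \in W])) ?add0r.
    apply: le_trans hW; apply: (Pr_mono hP) => D [_ hD]; apply/negP => h; exact: hD.
  move=> D [[hFD [_ hYD]] DW] hD.
  have [g [gD gF bg]] := tagD D hD hFD.
  have hbl : all (fun f => blk f != blk g) A.
    apply/allP => f hf; apply/negP => /eqP ebl.
    have := pos_blk hP hexcl hD (hFD f hf) gD ebl => efg.
    by move: gF; rewrite -efg; move/negP; apply.
  have gY : g \in Y.
    rewrite mem_filter bg hbl /=; apply/flattenP; exists (enum_fset D) => //.

    exact: (map_f _ DW).
  by move: (hYD g gY); rewrite gD.
have : P D1 * P D0 <= e.
  apply: le_trans L3; rewrite Eq; apply: ler_pM => //; exact: P_ge0.
have : 0 < P D1 * P D0 by rewrite mulr_gt0.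
rewrite /e; move: (P D1 * P D0) => x; lra.
Qed.

End Final.

Theorem lemma7p10 (U : countType) (R : realType) (HU : infinite_type U)
  (Q : graph U -> R) :
  edge_independent Q -> ~ in_sjfCQ_BID Q.
Proof.
move=> [_ [hsimp [_ hunb]]] [S [ar [P [phi [[hP [blk [hind hexcl]]] [[hsjf _] hQ]]]]]].
move: hsjf => /andP[_ hrels].
exact: (@final_contra U R S ar P blk Q phi hP hind hexcl hrels hQ hsimp hunb).
Qed.
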